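(* Let $n\ge 5$ and let $G$ be a unicyclic graph on $n$ vertices. Suppose $G\not\cong C_n$ and the degree sequence of $G$ is not $(3,2,\ldots,2,1)$ (one vertex of degree $3$, $n-2$ of degree $2$, one of degree $1$). Then $\mathrm{irr}_t(G)\ge 4n-8$. Equality holds if and only if the degree sequence of $G$ is $(3,3,2,\ldots,2,1,1)$, i.e. two vertices of degree $3$, $n-4$ vertices of degree $2$ and two vertices of degree $1$.
   Context: A unicyclic graph is a simple connected graph whose number of edges equals its number of vertices. For a graph $G=(V,E)$ and $w\in V$, $d_G(w)$ is the degree of $w$. The total irregularity is $\mathrm{irr}_t(G)=\frac12\sum_{x,y\in V}|d_G(x)-d_G(y)|$, where the sum runs over all ordered pairs of vertices. $C_n$ is the cycle on $n$ vertices. Degree sequences are listed in nonincreasing order. *)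

(* Defs.v *)
From mathcomp Require Import all_boot.
Set Implicit Arguments. Unset Strict Implicit. Unset Printing Implicit Defensive.

Definition simple_graph (T : finType) (e : rel T) : Prop :=
  symmetric e /\ irreflexive e.

Definition connected_graph (T : finType) (e : rel T) : Prop :=
  forall x y : T, connect e x y.

Definition edge_set (T : finType) (e : rel T) : {set {set T}} :=
  [set [set x; y] | x in T, y in T & e x y].

Definition unicyclic (T : finType) (e : rel T) : Prop :=
  [/\ simple_graph e, connected_graph e & #|edge_set e| = #|T|].

Definition deg (T : finType) (e : rel T) (x : T) : nat := #|[set y | e x y]|.

Definition absdiff (m n : nat) : nat := (m - n) + (n - m).

Definition irrt (T : finType) (e : rel T) : nat :=
  (\sum_(x : T) \sum_(y : T) absdiff (deg e x) (deg e y)) %/ 2.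

Definition deg_seq (T : finType) (e : rel T) : seq nat :=
  sort geq [seq deg e x | x <- enum T].

Definition cycle_adj (n : nat) (i j : 'I_n) : bool :=
  (val j == (val i).+1 %% n) || (val i == (val j).+1 %% n).

Definition iso_to_cycle (T : finType) (e : rel T) (n : nat) : Prop :=
  exists f : T -> 'I_n, bijective f /\ forall x y, e x y = cycle_adj (f x) (f y).

(* Main.v *)
Require Import Defs.
From mathcomp Require Import all_boot zify.
Set Implicit Arguments. Unset Strict Implicit. Unset Printing Implicit Defensive.

Definition L1 n := [:: 3] ++ nseq (n - 2) 2 ++ [:: 1].
Definition L2 n := [:: 3; 3] ++ nseq (n - 4) 2 ++ [:: 1; 1].

Lemma pn m x : 2 <= x -> path geq x (nseq m 2 ++ [:: 1]).
Proof.
elim: m x => [|m IH] x hx /=; first by rewrite andbT; lia.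
by rewrite IH // andbT.
Qed.

Lemma L1s n : sorted geq (L1 n).
Proof. exact: pn. Qed.
Lemma L2s n : sorted geq (L2 n).
Proof.
rewrite /L2 /=. suff H : forall m x, 2 <= x -> path geq x (nseq m 2 ++ [:: 1; 1]) by exact: H.
elim => [|m IH] x hx /=; first by rewrite andbT (ltnW hx).
by rewrite hx IH.
Qed.


Lemma L1c n k : count_mem k (L1 n) =
  if k == 1 then 1 else if k == 2 then n - 2 else if k == 3 then 1 else 0.
Proof.
rewrite /L1 !count_cat count_nseq /=.
by move: k => [|[|[|[|k]]]] /=; lia.
Qed.
Lemma L2c n k : count_mem k (L2 n) =
  if k == 1 then 2 else if k == 2 then n - 4 else if k == 3 then 2 else 0.
Proof.
rewrite /L2 !count_cat count_nseq /=.
by move: k => [|[|[|[|k]]]] /=; lia.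
Qed.


Section Num.
Variables (T : finType) (d : T -> nat) (n : nat).
Hypothesis H1 : forall x, 1 <= d x.
Hypothesis Hs : \sum_x d x = 2 * n.
Hypothesis Hn : #|T| = n.

Lemma sumD (F G : T -> nat) : \sum_x (F x + G x) = \sum_x F x + \sum_x G x.
Proof. exact: big_split. Qed.
Lemma sumC (c : nat) : \sum_(x : T) c = #|T| * c.
Proof. by rewrite sum_nat_const. Qed.
Lemma sum_le (F G : T -> nat) : (forall x, F x <= G x) -> \sum_x F x <= \sum_x G x.
Proof. move=> H; exact: leq_sum. Qed.
Lemma sum_eq (F G : T -> nat) : (forall x, F x = G x) -> \sum_x F x = \sum_x G x.
Proof. move=> H; exact: eq_bigr. Qed.
Lemma sumM (c : nat) (F : T -> nat) : \sum_x (c * F x) = c * \sum_x F x.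
Proof. by rewrite big_distrr. Qed.

Definition a := \sum_x (d x == 1 : nat).
Definition b := \sum_x (d x == 2 : nat).
Definition h3 := \sum_x (d x == 3 : nat).
Definition g4 := \sum_x (3 < d x : nat).
Definition Dx x := \sum_y absdiff (d x) (d y).
Definition S := \sum_x Dx x.

Lemma F1 : \sum_x (d x - 2) = a.
Proof.
have E : \sum_x (d x + (d x == 1 : nat)) = \sum_x ((d x - 2) + 2).
  apply: sum_eq => x; move: (d x) (H1 x) => [|[|[|v]]] //= _; lia.
move: E; rewrite !sumD Hs sumC Hn /a; lia.
Qed.

Lemma F2 : a + b + h3 + g4 = n.
Proof.
have E : \sum_x ((d x == 1 : nat) + (d x == 2 : nat) + (d x == 3 : nat) + (3 < d x : nat)) = \sum_(x : T) 1.
  apply: sum_eq => x; move: (d x) (H1 x) => [|[|[|[|v]]]] //=.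
by move: E; rewrite !sumD sumC Hn muln1.
Qed.

Lemma F3 : h3 + 2 * g4 <= a.
Proof.
rewrite -F1 /h3 /g4 -sumM -sumD; apply: sum_le => x.
move: (d x) => [|[|[|[|v]]]] //=; lia.
Qed.

Lemma F4 : g4 = 0 -> h3 = a.
Proof.
move=> /eqP; rewrite /g4 sum_nat_eq0 => /forallP H.
rewrite -F1 /h3; apply: sum_eq => x; have := H x; move: (d x) => [|[|[|[|v]]]] //=.
Qed.

Lemma Dlow x : (d x == 1 : nat) * n + (d x == 2 : nat) * (2 * a) + (d x - 2) * n <= Dx x.
Proof.
rewrite /Dx. have := H1 x. case E: (d x) => [|[|[|v]]] // _ /=.
- have E2 : \sum_y absdiff 1 (d y) + \sum_(y : T) 1 = \sum_y d y.
    rewrite -sumD; apply: sum_eq => y; have := H1 y; rewrite /absdiff; lia.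
  move: E2; rewrite sumC Hs Hn; lia.
- have E2 : \sum_y absdiff 2 (d y) = \sum_y (d y == 1 : nat) + \sum_y (d y - 2).
    rewrite -sumD; apply: sum_eq => y; have := H1 y; rewrite /absdiff.
    move: (d y) => [|[|[|w]]] //= _; lia.
  rewrite E2 F1 /a; lia.
- have E2 : \sum_(y : T) v.+3 <= \sum_y absdiff v.+3 (d y) + \sum_y d y.
    rewrite -sumD; apply: sum_le => y; rewrite /absdiff; lia.
  move: E2; rewrite sumC Hs Hn. rewrite !mul0n !add0n. lia.
Qed.

Lemma Slow : 2 * a * n + 2 * a * b <= S.
Proof.
have E := sum_le Dlow.
have E2 : \sum_x ((d x == 1 : nat) * n + (d x == 2 : nat) * (2 * a) + (d x - 2) * n)
   = \sum_x (n * (d x == 1 : nat) + (2 * a) * (d x == 2 : nat) + n * (d x - 2)).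
  by apply: sum_eq => x; lia.
rewrite E2 !sumD !sumM F1 in E. rewrite /S; fold a b in E; lia.
Qed.

Lemma le3 : g4 = 0 -> forall x, d x <= 3.
Proof.
move=> /eqP; rewrite /g4 sum_nat_eq0 => /forallP H x; have := H x.
by move: (d x) => [|[|[|[|v]]]].
Qed.

Lemma Dex : g4 = 0 -> forall x,
  Dx x = (d x == 1 : nat) * n + (d x == 2 : nat) * (2 * a) + (d x == 3 : nat) * n.
Proof.
move=> g0 x; have L3 := le3 g0; rewrite /Dx. have := L3 x. have := H1 x.
case E: (d x) => [|[|[|[|v]]]] // _ _ /=.
- have E2 : \sum_y absdiff 1 (d y) + \sum_(y : T) 1 = \sum_y d y.
    rewrite -sumD; apply: sum_eq => y; have := H1 y; rewrite /absdiff; lia.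
  move: E2; rewrite sumC Hs Hn; lia.
- have E2 : \sum_y absdiff 2 (d y) = \sum_y (d y == 1 : nat) + \sum_y (d y - 2).
    rewrite -sumD; apply: sum_eq => y; have := H1 y; rewrite /absdiff.
    move: (d y) => [|[|[|w]]] //= _; lia.
  rewrite E2 F1 /a; lia.
- have E2 : \sum_(y : T) 3 = \sum_y absdiff 3 (d y) + \sum_y d y.
    rewrite -sumD; apply: sum_eq => y; have := L3 y; rewrite /absdiff; lia.
  move: E2; rewrite sumC Hs Hn; lia.
Qed.

Lemma Sexact : g4 = 0 -> S = n * a + 2 * a * b + n * h3.
Proof.
move=> g0; rewrite /S (sum_eq (Dex g0)).
have E2 : \sum_x ((d x == 1 : nat) * n + (d x == 2 : nat) * (2 * a) + (d x == 3 : nat) * n)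
   = \sum_x (n * (d x == 1 : nat) + (2 * a) * (d x == 2 : nat) + n * (d x == 3 : nat)).
  by apply: sum_eq => x; lia.
by rewrite E2 !sumD !sumM.
Qed.

Lemma all2 : a = 0 -> forall x, d x = 2.
Proof.
move=> a0. have := F2; have := F3; rewrite a0 => ? ?.
have : a + h3 + g4 == 0 by rewrite a0; apply/eqP; lia.
rewrite /a /h3 /g4 -!sumD sum_nat_eq0 => /forallP H x; have := H x; have := H1 x.
by move: (d x) => [|[|[|[|v]]]].
Qed.

Lemma cnt_of : g4 = 0 -> forall k, \sum_x (d x == k : nat) =
  if k == 1 then a else if k == 2 then b else if k == 3 then h3 else 0.
Proof.
move=> g0 [|[|[|[|k]]]] //=.
- rewrite big1 // => x _; have := H1 x; by case: (d x).
- rewrite big1 // => x _; have := le3 g0 x; move: (d x) => [|[|[|[|v]]]] //.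
Qed.

Definition ds := sort geq [seq d x | x <- enum T].

Lemma count_sum (P : pred T) : count P (enum T) = \sum_x P x.
Proof.
rewrite -sum1_count big_mkcond /= big_enum /=; apply: eq_bigr => x _; by case: (P x).
Qed.

Lemma ds_count k : count_mem k ds = \sum_x (d x == k : nat).
Proof. by rewrite /ds (permP (permEl (perm_sort geq _))) count_map count_sum. Qed.

Lemma ds_eq s : sorted geq s -> (forall k, count_mem k s = \sum_x (d x == k : nat)) -> ds = s.
Proof.
move=> Hsrt Hc; apply: (sorted_eq (leT:=geq)).
- move=> x y z /=; lia.
- move=> x y /andP [] /=; lia.
- apply: sort_sorted => x y /=; exact: leq_total.
- exact: Hsrt.
- apply/allP => k _; apply/eqP; by rewrite ds_count Hc.
Qed.

Lemma core : 5 <= n -> ~ (forall x, d x = 2) -> ds <> L1 n ->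
  4 * n - 8 <= S %/ 2 /\ (S %/ 2 = 4 * n - 8 <-> ds = L2 n).
Proof.
move=> n5 Nall NL1.
have f2 := F2; have f3 := F3; have sl := Slow.
have [a0|a1] := eqVneq a 0; first by case: Nall; exact: all2.
have [a1'|a2] := eqVneq a 1.
  have g0 : g4 = 0 by lia.
  have h1 := F4 g0.
  case: NL1; apply: ds_eq; first exact: L1s.
  by move=> k; rewrite L1c cnt_of //; move: k => [|[|[|[|k]]]] //=; lia.
case: (boolP ((a == 2) && (g4 == 0))) => [/andP [/eqP a2' /eqP g0]|neq].
  have h2 := F4 g0.
  have SE := Sexact g0.
  have -> : S = (4 * n - 8) * 2 by rewrite SE; lia.
  rewrite mulnK //; split => //; split => // _.
  apply: ds_eq; first exact: L2s.
  by move=> k; rewrite L2c cnt_of //; move: k => [|[|[|[|k]]]] //=; lia.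
have HS : 8 * n - 14 <= S.
  have [e2|ne2] := eqVneq a 2.
    rewrite e2 in neq; have g1 : g4 = 1 by move: neq; rewrite eqxx /=; lia.
    nia.
  have [e3|ne3] := eqVneq a 3; first nia.
  nia.
have HS2 : 4 * n - 7 <= S %/ 2 by lia.
split; first lia.
split => [H|]; first lia.
move=> E.
have c1 := ds_count 1; have c2 := ds_count 2; have c3 := ds_count 3.
rewrite E !L2c /= in c1 c2 c3.
have : g4 = 0 by rewrite /a /b /h3 in f2; lia.
move: neq; rewrite /a -c1 eqxx /= => /eqP; lia.
Qed.
End Num.
Section G.
Variables (T : finType) (e : rel T).
Hypothesis esym : symmetric e.
Hypothesis eirr : irreflexive e.

Lemma deg_sum x : deg e x = \sum_y (e x y : nat).
Proof.
rewrite /deg -sum1_card big_mkcond /=; apply: eq_bigr => y _; rewrite inE; by case: (e x y).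
Qed.

Let r (x : T) : nat := enum_rank x.

Lemma r_inj : injective r.
Proof. move=> x y /val_inj H; exact: enum_rank_inj H. Qed.

Definition Dl := [set p : T * T | e p.1 p.2 && (r p.1 < r p.2)].

Lemma edge_Dl : edge_set e = (fun p : T * T => [set p.1; p.2]) @: Dl.
Proof.
apply/setP => E; apply/idP/idP.
- case/imset2P => x y _; rewrite !inE /= => exy ->.
  have [lt|ge] := ltnP (r x) (r y).
  + by apply/imsetP; exists (x, y) => //; rewrite inE /= exy lt.
  + apply/imsetP; exists (y, x); last by rewrite setUC.
    rewrite inE /= esym exy /= ltn_neqAle ge andbT.
    apply/negP => /eqP /r_inj H; by rewrite H eirr in exy.
- case/imsetP => [[x y]] /[!inE] /= /andP [exy _] ->.
  by apply/imset2P; exists x y; rewrite ?inE.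
Qed.

Lemma card_edge : #|edge_set e| = #|Dl|.
Proof.
rewrite edge_Dl card_in_imset // => [[x y]] [x' y'] /[!inE] /= /andP [_ l1] /andP [_ l2] E.
have hx : x \in [set x'; y'] by rewrite -E set21.
have hy : y \in [set x'; y'] by rewrite -E set22.
have hx' : x' \in [set x; y] by rewrite E set21.
case/set2P: hx => ?; case/set2P: hy => ?; subst => //; try lia.

Qed.

Lemma card_Dl : #|Dl| = \sum_x \sum_y ((e x y && (r x < r y)) : nat).
Proof.
rewrite -sum1_card big_mkcond /= pair_big /=; apply: eq_bigr => [[x y]] _.
by rewrite inE /=; case: (_ && _).
Qed.

Lemma handshake : \sum_x deg e x = 2 * #|edge_set e|.
Proof.
have E1 : \sum_x deg e x = \sum_x \sum_y ((e x y && (r x < r y)) : nat)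
      + \sum_x \sum_y ((e x y && (r y < r x)) : nat).
  rewrite -big_split /=; apply: eq_bigr => x _; rewrite deg_sum -big_split /=.
  apply: eq_bigr => y _; case exy: (e x y) => //=.
  have : r x != r y by apply/negP => /eqP /r_inj H; rewrite H eirr in exy.
  lia.
have E2 : \sum_x \sum_y ((e x y && (r y < r x)) : nat)
        = \sum_x \sum_y ((e x y && (r x < r y)) : nat).
  rewrite exchange_big /=; apply: eq_bigr => x _; apply: eq_bigr => y _.
  by rewrite esym.
by rewrite E1 E2 card_edge card_Dl; lia.
Qed.
End G.
Section C.
Variables (T : finType) (e : rel T).
Hypothesis esym : symmetric e.
Hypothesis eirr : irreflexive e.
Hypothesis d2 : forall x, deg e x = 2.

Lemma third b x y z : e b x -> e b y -> e b z -> x != y -> z = x \/ z = y.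
Proof.
move=> ex ey ez nxy.
have := d2 b; rewrite /deg (cardsD1 x) (cardsD1 y) (cardsD1 z) !inE ex ey ez eq_sym nxy /=.
case: (eqVneq z y) => [->|nzy]; first by right.
case: (eqVneq z x) => [->|nzx]; first by left.
by [].
Qed.

Definition other (a b : T) := odflt b [pick y | e b y && (y != a)].

Lemma other_spec a b : e b (other a b) && (other a b != a).
Proof.
rewrite /other; case: pickP => [y H | H] //=.
have : [set y | e b y] \subset [set a].
  apply/subsetP => y; rewrite !inE => eby; have := H y; rewrite /= eby /=.
  by move/negbFE.
move/subset_leq_card; rewrite cards1; have := d2 b; rewrite /deg => ->.
by [].
Qed.

Variable v0 : T.
Fixpoint wp (k : nat) : T * T :=
  if k is k'.+1 then ((wp k').2, other (wp k').1 (wp k').2)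
  else (v0, other v0 v0).
Definition w k := (wp k).1.

Lemma adj k : e (w k) (w k.+1).
Proof.
case: k => [|k]; rewrite /w /=.
  by have /andP [] := other_spec v0 v0.
by have /andP [] := other_spec (wp k).1 (wp k).2.
Qed.

Lemma nb k : w k.+2 != w k.
Proof. rewrite /w /=; by have /andP [] := other_spec (wp k).1 (wp k).2. Qed.


Hypothesis conn : forall x y, connect e x y.

Lemma cycle_iso n : #|T| = n -> iso_to_cycle e n.
Proof.
move=> Hn.
pose P k := [exists j : 'I_k, w j == w k].
have exP : exists k, P k.
  pose s := [seq w i | i <- iota 0 #|T|.+1].
  have : ~~ uniq s.
    apply/negP => U; have H : {subset s <= enum T} by move=> x _; rewrite mem_enum.
    by have := uniq_leq_size U H; rewrite size_map size_iota -cardT ltnn.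
  case/(uniqPn v0) => [i [j [lij ljs E]]].
  rewrite size_map size_iota in ljs.
  rewrite !(nth_map 0) ?size_iota ?(ltn_trans lij) // !nth_iota ?(ltn_trans lij) // !add0n in E.
  by exists j; apply/existsP; exists (Ordinal lij); rewrite /= E.
case: (ex_minnP exP) => k Pk kmin.
have inj : forall i j, i < k -> j < k -> w i = w j -> i = j.
  move=> i j ik jk E; case: (ltngtP i j) => // lij.
  - have : P j by apply/existsP; exists (Ordinal lij); rewrite /= E.
    by move/kmin; lia.
  - have : P i by apply/existsP; exists (Ordinal lij); rewrite /= E.
    by move/kmin; lia.
case/existsP: Pk => j0 /eqP Ej0.
have j0k := ltn_ord j0.
have kj : j0.+3 <= k.
  have [k1|[k2|//]] : k = j0.+1 \/ k = j0.+2 \/ j0.+3 <= k by lia.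
  - have := adj j0; rewrite -k1 -Ej0 eirr //.
  - have := nb j0; rewrite -k2 -Ej0 eqxx //.
have j00 : nat_of_ord j0 = 0.
  move: Ej0 kj j0k; case: (nat_of_ord j0) => [//|j'] Ej0 kj j0k.
  have ex : e (w j'.+1) (w j') by rewrite esym adj.
  have ey := adj j'.+1.
  have ez : e (w j'.+1) (w k.-1).
    rewrite Ej0 esym; have -> : k = k.-1.+1 by lia. exact: adj.
  have nxy : w j' != w j'.+2 by apply/negP => /eqP /inj; lia.
  case: (third ex ey ez nxy) => /inj; lia.
rewrite j00 in Ej0 kj.
pose nxt i := if i.+1 < k then i.+1 else 0.
pose prv i := if i is i'.+1 then i' else k.-1.
have nxtk i : i < k -> nxt i < k by rewrite /nxt; case: ifP => //; lia.
have prvk i : i < k -> prv i < k by rewrite /prv; case: i => //; lia.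
have np i : i < k -> nxt i != prv i.
  rewrite /nxt /prv; case: ifP; case: i => [|i] //=; lia.
have wn i : i < k -> w (nxt i) = w i.+1.
  rewrite /nxt; case: ifP => // /negbT H ik; have -> : i.+1 = k by lia. by [].
have wpv i : i < k -> e (w (prv i)) (w i).
  case: i => [|i] ik /=; last exact: adj.
  rewrite Ej0; have {2}-> : k = k.-1.+1 by lia. exact: adj.
have nbs i y : i < k -> e (w i) y -> y = w (nxt i) \/ y = w (prv i).
  move=> ik ey; apply: (third (b := w i)) => //.
  - by rewrite wn // adj.
  - by rewrite esym wpv.
  - by apply/negP => /eqP /inj H; have := np i ik; rewrite H ?eqxx ?nxtk ?prvk.
pose S := [set w (nat_of_ord i) | i : 'I_k].
have inS i : i < k -> w i \in S.
  by move=> ik; apply/imsetP; exists (Ordinal ik).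
have clS x y : e x y -> x \in S -> y \in S.
  move=> exy /imsetP [i _ Ex]; rewrite Ex in exy; case: (nbs i y (ltn_ord i) exy) => ->; apply: inS.
  exact: nxtk. exact: prvk.
have allS y : y \in S.
  have cl : closed e S by move=> x z exz; apply/idP/idP; [exact: clS | apply: clS; rewrite esym].
  rewrite -(closed_connect cl (conn v0 y)).
  apply: (inS 0); lia.
have kn : k = n.
  apply/eqP; rewrite eqn_leq; apply/andP; split.
  - rewrite -Hn -[k]card_ord; apply: (@leq_card _ _ (fun i : 'I_k => w i)).
    by move=> i j /inj /val_inj; apply.
  - rewrite -Hn -[X in _ <= X]card_ord.
    have -> : #|T| = #|S|.
      apply/eqP; rewrite eqn_leq max_card andbT.
      have -> : S = setT by apply/setP => y; rewrite inE allS.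
      by rewrite cardsT.
    exact: leq_imset_card.
rewrite -kn.
have nxtm i : i < k -> nxt i = i.+1 %% k.
  rewrite /nxt; case: ifP => [H|/negbT H] ik; first by rewrite modn_small.
  have E : i.+1 = k by lia.
  by rewrite E modnn.
have np2 i : i < k -> nxt (prv i) = i.
  rewrite /nxt /prv; case: i => [|i] ik; case: ifP => //; lia.
have key : forall i j : 'I_k, e (w i) (w j) = cycle_adj i j.
  move=> i j; have ik := ltn_ord i; have jk := ltn_ord j.
  rewrite /cycle_adj -!nxtm //; apply/idP/idP.
  - move=> eij; case: (nbs i (w j) ik eij) => E.
    + by apply/orP; left; apply/eqP; exact: (inj _ _ jk (nxtk _ ik) E).
    + apply/orP; right; apply/eqP.
      by have /= -> := inj _ _ jk (prvk _ ik) E; rewrite np2.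
  - case/orP => /eqP H.
    + have -> : w j = w (nxt i) by rewrite -H.
      by rewrite (wn _ ik) adj.
    + have -> : w i = w (nxt j) by rewrite -H.
      by rewrite esym (wn _ jk) adj.
pose g := fun i : 'I_k => w i.
have ginj : injective g by move=> i j /inj H; apply/val_inj/H.
have gb : bijective g.
  apply: (inj_card_bij ginj); by rewrite card_ord Hn kn.
case: gb => g' gK g'K.
exists g'; split; first by exists g.
move=> x y.
have gx : w (g' x) = x := g'K x.
have gy : w (g' y) = y := g'K y.
by rewrite -key gx gy.
Qed.
End C.
Lemma deg_pos (T : finType) (e : rel T) : (forall x y, connect e x y) -> 1 < #|T| ->
  forall x, 0 < deg e x.
Proof.
move=> conn T2 x.
have : 0 < #|[set~ x]| by rewrite cardsC1; lia.
case/card_gt0P => y; rewrite !inE => nyx.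
case/connectP: (conn x y) => [[|z p]] /= pth Ey; first by rewrite Ey eqxx in nyx.
case/andP: pth => exz _.
by rewrite /deg (cardsD1 z) inE exz.
Qed.

Theorem theorem10 (n : nat) (T : finType) (e : rel T) :
  5 <= n -> #|T| = n -> unicyclic e ->
  ~ iso_to_cycle e n ->
  deg_seq e <> [:: 3] ++ nseq (n - 2) 2 ++ [:: 1] ->
  4 * n - 8 <= irrt e /\
  (irrt e = 4 * n - 8 <-> deg_seq e = [:: 3; 3] ++ nseq (n - 4) 2 ++ [:: 1; 1]).
Proof.
move=> n5 Hn [[esym eirr] conn HE] Niso NL1.
have hs : \sum_x deg e x = 2 * n by rewrite handshake // HE Hn.
have H1 : forall x, 1 <= deg e x by apply: deg_pos => //; lia.
have N2 : ~ (forall x, deg e x = 2).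
  move=> all; apply: Niso.
  have : 0 < #|T| by lia.
  case/card_gt0P => v0 _.
  exact: (cycle_iso esym eirr all v0 conn Hn).
exact: (core H1 hs Hn n5 N2 NL1).
Qed.
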